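(* Let $F$ be a positive integer. The directed graph $\mathrm{G}^K(\mathcal{I}(F))$ is a tree with root $\hat x\in\{0,1\}^F$, the vector whose first $\lceil\frac{F+1}{2}\rceil-1$ entries are $1$, next $F-\lceil\frac{F+1}{2}\rceil$ entries are $0$, and last entry is $1$. Moreover, if $x=\mathcal{K}(S,F+1)$ for some $S\in\mathcal{I}(F)$, then the children of $x$ in $\mathrm{G}^K(\mathcal{I}(F))$ are exactly the vectors $x+\mathrm{e}_n-\mathrm{e}_{F-n}$ where $n\in\{1,\dots,F\}$ ranges over the indices satisfying: (1) $x_n=0$; (2) $x_k+x_j\ge 1$ for all positive integers $k,j$ with $k+j=n$; (3) $\frac F2<n<F$; (4) $x_{2n-F}=1$; (5) $3n\neq 2F$; (6) $4n\neq 3F$; (7) $n>F-m_x$, where $m_x=\min\{j: x_j=0\}$ if some $x_j=0$ and $m_x=F+1$ otherwise.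
   Context: A numerical semigroup is a subset $S\subseteq\mathbb{N}$ closed under addition, containing $0$, with $\mathbb{N}\setminus S$ finite; its Frobenius number is the largest integer not in $S$; its multiplicity $\mathrm{m}(S)$ is its smallest positive element. A numerical semigroup is irreducible if it cannot be written as the intersection of two numerical semigroups properly containing it; $\mathcal{I}(F)$ is the set of irreducible numerical semigroups with Frobenius number $F$. For $n\in S\setminus\{0\}$ and $i=1,\dots,n-1$, let $w_i$ be the least element of $S$ congruent to $i$ modulo $n$; the Kunz-coordinates vector of $S$ with respect to $n$ is $\mathcal{K}(S,n)=(x_1,\dots,x_{n-1})$ with $x_i=\frac{w_i-i}{n}$. For $S$ with Frobenius number $F$, $\mathcal{K}(S,F+1)\in\{0,1\}^F$ and $x_i=1$ iff $i\notin S$. $\mathrm{e}_i\in\mathbb{Z}^F$ is the $i$th unit vector. The directed graph $\mathrm{G}^K(\mathcal{I}(F))$ has vertex set $\{\mathcal{K}(S,F+1): S\in\mathcal{I}(F)\}$, and $(x,y)$ is an edge iff $m=\min\{i: x_i=0\}$ exists, $m<\frac F2$, and $y=x+\mathrm{e}_m-\mathrm{e}_{F-m}$. A directed graph is a tree with root $r$ if for every vertex $v\ne r$ there is a unique path of distinct edges from $v$ to $r$; if $(v,w)$ is an edge, $v$ is a child of $w$. *)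

(* Defs.v *)
From mathcomp Require Import all_boot all_order all_algebra.
Unset Printing Implicit Defensive.
Import GRing.Theory Num.Theory.

Definition numerical_semigroup (S : nat -> bool) : Prop :=
  S 0 /\ (forall a b, S a -> S b -> S (a + b)) /\
  (exists s : seq nat, forall n, ~~ S n -> n \in s).

Definition frobenius (S : nat -> bool) (F : nat) : Prop :=
  ~~ S F /\ forall n, F < n -> S n.

Definition proper_superset (S T : nat -> bool) : Prop :=
  (forall n, S n -> T n) /\ exists n, T n && ~~ S n.

Definition irreducible_ns (S : nat -> bool) : Prop :=
  numerical_semigroup S /\
  ~ exists T1 T2 : nat -> bool,
      [/\ numerical_semigroup T1, numerical_semigroup T2,
          proper_superset S T1, proper_superset S T2 &
          forall n, S n = T1 n && T2 n].

Definition in_IF (F : nat) (S : nat -> bool) : Prop :=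
  irreducible_ns S /\ frobenius S F.

(* Kunz coordinate: the least element w_i of S congruent to i modulo n
   (for 0 < i < n) is i + k * n, i.e. x_i = (w_i - i)/n = k. *)
Definition kunz_coord (S : nat -> bool) (n i k : nat) : Prop :=
  S (i + k * n) /\ forall k', k' < k -> ~~ S (i + k' * n).

(* Vectors of Z^F; the ordinal k : 'I_F stands for coordinate k+1. *)
Definition vec (F : nat) := {ffun 'I_F -> int}.

(* 1-based coordinate access (0 outside 1..F). *)
Definition kcoord (F : nat) (x : vec F) (j : nat) : int :=
  if 0 < j then (match insub j.-1 with Some i => x i | None => 0%R end) else 0%R.

Definition kunz_vec (S : nat -> bool) (F : nat) (x : vec F) : Prop :=
  forall i : 'I_F, exists k : nat, x i = Posz k /\ kunz_coord S F.+1 i.+1 k.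

Definition unitv (F m : nat) : vec F := [ffun k : 'I_F => Posz (k.+1 == m)].

Definition shiftv (F : nat) (x : vec F) (m : nat) : vec F :=
  [ffun k : 'I_F => (x k + unitv F m k - unitv F (F - m) k)%R].

Definition GK_vertex (F : nat) (x : vec F) : Prop :=
  exists S, in_IF F S /\ kunz_vec S F x.

Definition GK_edge (F : nat) (x y : vec F) : Prop :=
  GK_vertex F x /\ GK_vertex F y /\
  exists m, [/\ 1 <= m <= F, kcoord F x m = 0%R,
             (forall i, 1 <= i < m -> kcoord F x i <> 0%R),
             m.*2 < F & y = shiftv F x m].

(* walk v = v0 -> v1 -> ... -> vk = r, with p = [:: v1; ...; vk] *)
Fixpoint walk (T : Type) (E : T -> T -> Prop) (v : T) (p : seq T) (r : T) : Prop :=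
  match p with
  | [::] => v = r
  | w :: p' => E v w /\ walk T E w p' r
  end.

(* path of distinct edges *)
Definition edge_path (T : eqType) (E : T -> T -> Prop) (v : T) (p : seq T) (r : T) : Prop :=
  walk T E v p r /\ uniq (zip (v :: p) p).

Definition is_tree (T : eqType) (V : T -> Prop) (E : T -> T -> Prop) (r : T) : Prop :=
  V r /\ forall v, V v -> v <> r -> exists! p : seq T, edge_path T E v p r.

Definition ceil_half (n : nat) : nat := n.+1./2.

Definition xhat (F : nat) : vec F :=
  [ffun k : 'I_F => Posz ((k.+1 <= ceil_half F.+1 - 1) || (k.+1 == F))].

Definition mx (F : nat) (x : vec F) : nat :=
  head F.+1 [seq j <- iota 1 F | kcoord F x j == 0%R].

(* Main.v *)
Require Import Defs.
From mathcomp Require Import all_boot all_order all_algebra.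
From mathcomp Require Import zify.
Import GRing.Theory Num.Theory.

Lemma kcoordE F (x : vec F) (i : 'I_F) : kcoord F x i.+1 = x i.
Proof.
rewrite /kcoord /=; case: insubP => [j _ Hj|]; last by rewrite /= ltn_ord.
by congr (x _); apply: val_inj; rewrite Hj.
Qed.

Lemma kcoord_out F (x : vec F) j : (j == 0) || (F < j) -> kcoord F x j = 0%R.
Proof.
case/orP=> [/eqP->//|Hj]; rewrite /kcoord; case: ifP => // Hj0.
case: insubP => // k _ Hk; move: (ltn_ord k); rewrite Hk; lia.
Qed.


Lemma vec_ext F (x y : vec F) :
  (forall j, 0 < j <= F -> kcoord F x j = kcoord F y j) -> x = y.
Proof.
move=> H; apply/ffunP => i; rewrite -!kcoordE; apply: H; rewrite ltn_ord //.
Qed.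

Lemma ord_of F j : 0 < j <= F -> exists i : 'I_F, j = i.+1.
Proof.
move=> H; have Hj : j.-1 < F by lia.
exists (Ordinal Hj) => /=; lia.
Qed.

Lemma shiftE F (x : vec F) m j : 0 < j <= F ->
  kcoord F (shiftv F x m) j =
  (kcoord F x j + (if j == m then 1 else 0) - (if j == (F - m)%N then 1 else 0))%R.
Proof.
move/ord_of=> [i ->]; rewrite !kcoordE /shiftv /unitv !ffunE.
by case: (_ == m); case: (_ == F - m).
Qed.

Lemma xhatE F j : 0 < j <= F ->
  kcoord F (xhat F) j = Posz ((j <= ceil_half F.+1 - 1) || (j == F)).
Proof. by move/ord_of=> [i ->]; rewrite kcoordE /xhat ffunE. Qed.

Lemma ceil_halfE F : (ceil_half F.+1).*2 = F.+2 \/ (ceil_half F.+1).*2 = F.+1.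
Proof.
rewrite /ceil_half; have := odd_double_half F.+2; case: (odd _) => /=; lia.
Qed.

Lemma hf_spec (p : pred nat) a n :
  let h := head (a + n) [seq j <- iota a n | p j] in
  [/\ a <= h <= a + n, (h < a + n -> p h) & forall i, a <= i < h -> ~~ p i].
Proof.
elim: n a => [|n IH] a /=.
  by rewrite addn0 leqnn ltnn; split => // i; lia.
case: (boolP (p a)) => pa /=.
  split => //; first lia; move=> i; lia.
have [H1 H2 H3] := IH a.+1; rewrite addSnnS in H1 H2 H3.
split => //; first lia.
move=> i Hi; case: (eqVneq i a) => [->//|Hne]; apply: H3; lia.
Qed.

Lemma mx_spec F (x : vec F) :
  [/\ 0 < mx F x <= F.+1, (mx F x <= F -> kcoord F x (mx F x) = 0%R)
    & forall i, 0 < i < mx F x -> kcoord F x i <> 0%R].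
Proof.
have := hf_spec (fun j => kcoord F x j == 0%R) 1 F; rewrite add1n /=.
rewrite -/(mx F x) => -[H1 H2 H3]; split => //.
  by move=> H; apply/eqP; apply: H2; lia.
by move=> i Hi /eqP; apply/negP; apply: H3.
Qed.

Lemma mx_eq F (x : vec F) m : 0 < m <= F -> kcoord F x m = 0%R ->
  (forall i, 0 < i < m -> kcoord F x i <> 0%R) -> mx F x = m.
Proof.
move=> Hm H0 Hmin; have [H1 H2 H3] := mx_spec F x.
case: (ltngtP (mx F x) m) => // H.
  have : mx F x <= F by lia.
  move/H2 => H4; exfalso; by apply: (Hmin (mx F x)); [lia|].
by have := H3 m; lia.
Qed.

Lemma mx_gt F (x : vec F) m : m <= F ->
  (forall i, 0 < i <= m -> kcoord F x i <> 0%R) -> m < mx F x.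
Proof.
move=> Hm Hi; have [H1 H2 H3] := mx_spec F x.
rewrite ltnNge; apply/negP => H; apply: (Hi (mx F x)); first lia.
apply: H2; lia.
Qed.

Definition Pv F (x : vec F) : Prop :=
  [/\ (forall j, 0 < j <= F -> kcoord F x j = 0%R \/ kcoord F x j = 1%R),
      kcoord F x F = 1%R,
      (forall i j, 0 < i -> 0 < j -> i + j <= F -> kcoord F x i = 0%R ->
          kcoord F x j = 0%R -> kcoord F x (i + j) = 0%R) &
      (forall i, 0 < i < F -> i.*2 != F -> kcoord F x i = 1%R ->
          kcoord F x (F - i) = 1%R -> False)].

Lemma kunz_val S F (x : vec F) : frobenius S F -> kunz_vec S F x ->
  forall j, 0 < j <= F -> kcoord F x j = Posz (~~ S j).
Proof.
move=> [NF Hfr] Hk j /ord_of [i ->]; rewrite kcoordE.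
have [k [-> [HS Hlt]]] := Hk i.
case: (boolP (S i.+1)) => Si /=.
  case: k HS Hlt => // k _ /(_ 0 erefl); by rewrite mul0n addn0 Si.
case: k HS Hlt => [|[|k]] HS Hlt //.
  by move: HS; rewrite mul0n addn0 (negbTE Si).
have := Hlt 1 erefl; rewrite Hfr //; lia.
Qed.

Lemma vertex_P F (x : vec F) : GK_vertex F x -> Pv F x.
Proof.
move=> [S [[[NS Hirr] Hfrob] Hk]].
have Hv := kunz_val S F x Hfrob Hk.
move: (Hfrob) => [NF Hfr]; move: (NS) => [S0 [Sadd Sfin]].
have HF : 0 < F by case: (posnP F) => // E; move: NF; rewrite E S0.
have Z0 : forall j, 0 < j <= F -> kcoord F x j = 0%R -> S j.
  by move=> j Hj; rewrite Hv //; case: (S j).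
have Z1 : forall j, 0 < j <= F -> kcoord F x j = 1%R -> ~~ S j.
  by move=> j Hj; rewrite Hv //; case: (S j).
split.
- by move=> j Hj; rewrite Hv //; case: (S j); [left|right].
- by rewrite Hv ?NF //; apply/andP.
- move=> i j Hi Hj Hij Hxi Hxj; rewrite Hv; last lia.
  by rewrite Sadd // ?Z0 //; lia.
move=> i Hi Hi2 Hxi Hxj.
have Si : ~~ S i by apply: Z1 => //; lia.
have Sfi : ~~ S (F - i) by apply: Z1 => //; lia.
pose Q h := [&& 0 < h, h < F, ~~ S h, ~~ S (F - h) & h.*2 != F].
have exQ : exists h, Q h by exists i; rewrite /Q Si Sfi Hi2; lia.
have ubQ : forall h, Q h -> h <= F by move=> h /and5P[]; lia.
case: (ex_maxnP exQ ubQ) => h /and5P [Hh0 HhF Sh Sfh Hh2] Hmax.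
have H2h : F < h.*2.
  case: (ltngtP (h.*2) F) => // Hlt; last by rewrite Hlt eqxx in Hh2.
  have : Q (F - h).
    rewrite /Q Sfh subKn; last lia.
    by rewrite Sh; apply/and5P; split => //; lia.
  move/Hmax; lia.
have Shb : forall b, S b -> 0 < b -> S (h + b).
  move=> b Sb Hb; apply/negPn/negP => Shb.
  case: (ltnP F (h + b)) => Hhb; first by rewrite Hfr in Shb.
  case: (eqVneq (h + b) F) => Hhb2.
    have E : F - h = b by lia.
    by rewrite E Sb in Sfh.
  have Sf : ~~ S (F - (h + b)).
    apply/negP => Sf; have := Sadd _ _ Sf Sb.
    have -> : F - (h + b) + b = F - h by lia.
    by rewrite (negbTE Sfh).
  have : Q (h + b) by apply/and5P; split => //; lia.
  move/Hmax; lia.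
pose T1 n := S n || (n == h).
pose T2 n := S n || (n == F).
apply: Hirr; exists T1, T2; split.
- split; first by rewrite /T1 S0.
  split; last first.
    case: Sfin => s Hs; exists s => n; rewrite /T1 negb_or => /andP[] Sn _.
    exact: Hs.
  move=> a b /orP[Sa|/eqP->] /orP[Sb|/eqP->]; rewrite /T1.
  + by rewrite Sadd.
  + case: (posnP a) => [->|Ha]; first by rewrite add0n eqxx orbT.
    by rewrite addnC Shb.
  + case: (posnP b) => [->|Hb]; first by rewrite addn0 eqxx orbT.
    by rewrite Shb.
  + by rewrite Hfr //; lia.
- split; first by rewrite /T2 S0.
  split; last first.
    case: Sfin => s Hs; exists s => n; rewrite /T2 negb_or => /andP[] Sn _.
    exact: Hs.
  move=> a b /orP[Sa|/eqP->] /orP[Sb|/eqP->]; rewrite /T2.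
  + by rewrite Sadd.
  + case: (posnP a) => [->|Ha]; first by rewrite add0n eqxx orbT.
    by rewrite Hfr //; lia.
  + case: (posnP b) => [->|Hb]; first by rewrite addn0 eqxx orbT.
    by rewrite Hfr //; lia.
  + by rewrite Hfr //; lia.
- split; first by move=> n Sn; rewrite /T1 Sn.
  by exists h; rewrite /T1 eqxx orbT Sh.
- split; first by move=> n Sn; rewrite /T2 Sn.
  by exists F; rewrite /T2 eqxx orbT NF.
move=> n; rewrite /T1 /T2; case: (S n) => //=.
case: (eqVneq n h) => [->|] //=; case: (eqVneq h F) => //; lia.
Qed.

Lemma P_vertex F (x : vec F) : Pv F x -> GK_vertex F x.
Proof.
move=> [P01 PF Pcl Psym].
pose S n := kcoord F x n == 0%R.
have Sout : forall n, F < n -> S n by move=> n Hn; rewrite /S kcoord_out ?Hn ?orbT.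
have S0 : S 0 by rewrite /S kcoord_out.
have NSF : ~~ S F by rewrite /S PF.
have Sadd : forall a b, S a -> S b -> S (a + b).
  move=> a b Sa Sb; case: (posnP a) => [->//|Ha]; case: (posnP b) => [->|Hb].
    by rewrite addn0.
  case: (ltnP F (a + b)) => Hab; first exact: Sout.
  by apply/eqP; apply: Pcl => //; apply/eqP.
have NS : numerical_semigroup S.
  split => //; split => //; exists (iota 0 F.+1) => n Sn.
  rewrite mem_iota; case: (ltnP F n) => H; first by rewrite Sout in Sn.
  lia.
exists S; split; last first.
  move=> i; case: (P01 i.+1); first (by rewrite /= ltn_ord); rewrite kcoordE => Hx.
    exists 0; split; first by rewrite Hx.
    by split => // ; rewrite mul0n addn0 /S kcoordE Hx.
  exists 1; split; first by rewrite Hx.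
  split; first by apply: Sout; lia.
  by move=> k'; case: k' => // _; rewrite mul0n addn0 /S kcoordE Hx.
split; last by split.
split => //.
have side : forall T, numerical_semigroup T -> (forall n, S n -> T n) ->
    (exists n, T n && ~~ S n) -> ~~ T F -> False.
  move=> T [T0 [Tadd _]] Hsub [n /andP[Tn Sn]] TF.
  have Hn : 0 < n <= F.
    case: (posnP n) => [Hn|Hn]; first by rewrite Hn S0 in Sn.
    case: (ltnP F n) => H; first by rewrite Sout in Sn. lia.
  have Xn : kcoord F x n = 1%R by case: (P01 n Hn) => // /eqP; rewrite -/(S n) (negbTE Sn).
  have HnF : n != F by apply/eqP => E; rewrite -E Tn in TF.
  have TFn : ~~ T (F - n).
    apply/negP => /(Tadd _ _ Tn); rewrite subnKC; last lia.
    by rewrite (negbTE TF).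
  have SFn : ~~ S (F - n) by apply/negP => /Hsub; rewrite (negbTE TFn).
  have XFn : kcoord F x (F - n) = 1%R.
    case: (P01 (F - n)); [lia | | by []].
    by move/eqP; rewrite -/(S (F - n)) (negbTE SFn).
  case: (eqVneq n.*2 F) => H2.
    by move: (Tadd _ _ Tn Tn); rewrite addnn H2 (negbTE TF).
  by apply: (Psym n) => //; lia.
move=> [T1 [T2 [NS1 NS2 Hp1 Hp2 Heq]]].
have := Heq F; rewrite (negbTE NSF).
case: (boolP (T1 F)) => T1F /=; move=> /esym T2F.
  by apply: (side T2 NS2 (proj1 Hp2) (proj2 Hp2)); rewrite T2F.
by apply: (side T1 NS1 (proj1 Hp1) (proj2 Hp1)).
Qed.

Lemma P_pair F (x : vec F) i : Pv F x -> 0 < i < F -> kcoord F x i = 0%R ->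
  kcoord F x (F - i) = 1%R.
Proof.
move=> [P01 PF Pcl _] Hi H0; case: (P01 (F - i)); [lia| |by []] => H1.
have H := Pcl i (F - i) ltac:(lia) ltac:(lia) ltac:(lia) H0 H1.
rewrite subnKC in H; last lia. rewrite PF in H; lia.
Qed.

Lemma P_half F (x : vec F) i : Pv F x -> 0 < i -> i.*2 = F -> kcoord F x i = 1%R.
Proof.
move=> [P01 PF Pcl _] Hi H2; case: (P01 i); [lia| |by []] => H0.
have H := Pcl i i Hi Hi ltac:(lia) H0 H0.
rewrite addnn H2 PF in H; lia.
Qed.

Lemma P_one F (x : vec F) i : Pv F x -> 0 < i <= F -> kcoord F x i <> 0%R ->
  kcoord F x i = 1%R.
Proof. by move=> [P01 _ _ _] Hi; case: (P01 i Hi). Qed.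

Lemma edge_m F (x y : vec F) : GK_edge F x y ->
  [/\ Pv F x, Pv F y, (mx F x).*2 < F, 0 < mx F x & y = shiftv F x (mx F x)].
Proof.
move=> [Vx [Vy [m [Hm Hxm Hmin H2 Hy]]]].
have E : mx F x = m by apply: mx_eq.
rewrite E; split => //; try exact: vertex_P; lia.
Qed.

Lemma shiftE' F (x : vec F) m n j : m + n = F -> 0 < j <= F ->
  kcoord F (shiftv F x m) j =
  (kcoord F x j + (if j == m then 1 else 0) - (if j == n then 1 else 0))%R.
Proof. move=> Hmn Hj; rewrite shiftE //; have -> : F - m = n by lia. by []. Qed.

Ltac ifs := repeat (rewrite ?eqxx /=; match goal with
  |- context [if ?a == ?b then _ else _] =>
     case: (eqVneq a b) => [?|?]; try subst end).

Lemma up_P F (x : vec F) m n : Pv F x -> 0 < m -> m + n = F -> m < n ->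
  kcoord F x m = 0%R -> (forall i, 0 < i < m -> kcoord F x i <> 0%R) ->
  Pv F (shiftv F x m).
Proof.
move=> Px Hm Hmn Hmn2 Hxm Hmin.
have Hxn : kcoord F x n = 1%R.
  have -> : n = F - m by lia. apply: P_pair => //; lia.
have Hlt : forall i, 0 < i < m -> kcoord F x i = 1%R.
  move=> i Hi; apply: P_one => //; [lia | exact: Hmin].
case: (Px) => P01 PF Pcl Psym.
have Ey : forall p, 0 < p <= F -> kcoord F (shiftv F x m) p =
    (kcoord F x p + (if p == m then 1 else 0) - (if p == n then 1 else 0))%R.
  by move=> p Hp; rewrite (shiftE' F x m n _ Hmn).
have Hmn3 : m != n by apply/eqP; lia.
have Ym : kcoord F (shiftv F x m) m = 1%R.
  by rewrite Ey ?eqxx ?(negbTE Hmn3) ?Hxm; [ | lia].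
have Yn : kcoord F (shiftv F x m) n = 0%R.
  by rewrite Ey ?eqxx 1?eq_sym ?(negbTE Hmn3) ?Hxn; [ | lia].
have Yo : forall p, 0 < p <= F -> p != m -> p != n ->
    kcoord F (shiftv F x m) p = kcoord F x p.
  by move=> p Hp H1 H2; rewrite Ey // (negbTE H1) (negbTE H2); lia.
have yz : forall p, 0 < p <= F -> kcoord F (shiftv F x m) p = 0%R ->
    p = n \/ (p <> m /\ p <> n /\ kcoord F x p = 0%R).
  move=> p Hp; case: (eqVneq p n) => [->|H1]; first by left.
  case: (eqVneq p m) => [->|H2]; first by rewrite Ym; lia.
  by rewrite Yo //; right; split; [apply/eqP|split; [apply/eqP|]].
have yo : forall p, 0 < p <= F -> kcoord F (shiftv F x m) p = 1%R ->
    p = m \/ (p <> m /\ p <> n /\ kcoord F x p = 1%R).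
  move=> p Hp; case: (eqVneq p m) => [->|H1]; first by left.
  case: (eqVneq p n) => [->|H2]; first by rewrite Yn; lia.
  by rewrite Yo //; right; split; [apply/eqP|split; [apply/eqP|]].
split.
- move=> p Hp; case: (eqVneq p n) => [->|H1]; first by rewrite Yn; left.
  case: (eqVneq p m) => [->|H2]; first by rewrite Ym; right.
  by rewrite Yo //; apply: P01.
- by rewrite Yo //; apply/eqP; lia.
- move=> i j Hi Hj Hij Hyi Hyj.
  case: (yz i ltac:(lia) Hyi) => [Ei|[Him [Hin Hxi]]].
    exfalso; case: (yz j ltac:(lia) Hyj) => [Ej|[Hjm [Hjn Hxj]]]; first lia.
    have := Hlt j; lia.
  case: (yz j ltac:(lia) Hyj) => [Ej|[Hjm [Hjn Hxj]]].
    exfalso; have := Hlt i; lia.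
  have Hx := Pcl i j Hi Hj Hij Hxi Hxj.
  have := Hlt i; have := Hlt j => H1 H2.
  case: (eqVneq (i + j) n) => [->//|Hijn].
  by rewrite Yo //; [lia | apply/eqP; lia].
- move=> i Hi Hi2 Hyi Hyf.
  case: (yo i ltac:(lia) Hyi) => [Ei|[Him [Hin Hxi]]].
    by move: Hyf; rewrite Ei (_ : F - m = n) ?Yn; lia.
  case: (yo (F - i) ltac:(lia) Hyf) => [Ef|[Hfm [Hfn Hxf]]]; first lia.
  exact: (Psym i Hi Hi2 Hxi Hxf).
Qed.

Lemma edge_func F (x y z : vec F) : GK_edge F x y -> GK_edge F x z -> y = z.
Proof. by move=> /edge_m [_ _ _ _ ->] /edge_m [_ _ _ _ ->]. Qed.

Lemma edge_mono F (x y : vec F) : GK_edge F x y -> mx F x < mx F y.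
Proof.
move=> /edge_m [Px Py H2 H0 Ey]; rewrite Ey in Py *.
have [H1 Hz Hmin] := mx_spec F x.
move: Py H2 H0 H1 Hz Hmin; move Hm: (mx F x) => m Py H2 H0 H1 Hz Hmin.
apply: mx_gt; first lia.
move=> i Hi; rewrite (shiftE' F x m (F - m)); try lia.
have Hz' := Hz ltac:(lia).
case: (eqVneq i m) => [->|Him].
  rewrite (_ : (m == F - m) = false); last by apply/eqP; lia.
  rewrite Hz'; lia.
rewrite (_ : (i == F - m) = false); last by apply/eqP; lia.
have := Hmin i ltac:(lia); have := P_one F x i Px ltac:(lia); lia.
Qed.

Lemma up_edge F (x : vec F) : Pv F x -> (mx F x).*2 < F ->
  GK_edge F x (shiftv F x (mx F x)).
Proof.
move=> Px H2; have [H1 Hz Hmin] := mx_spec F x.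
have Pw : Pv F (shiftv F x (mx F x)).
  apply: (up_P F x (mx F x) (F - mx F x)) => //; try lia.
split; first exact: P_vertex.
split; first exact: P_vertex.
exists (mx F x); split => //; try lia.
Qed.

Lemma xhat_val F j : 0 < j <= F ->
  (kcoord F (xhat F) j = 1%R /\ (j < ceil_half F.+1 \/ j = F)) \/
  (kcoord F (xhat F) j = 0%R /\ ceil_half F.+1 <= j /\ j <> F).
Proof.
move=> Hj; rewrite xhatE //; have := ceil_halfE F.
move: (ceil_half F.+1) => c.
case: (leqP j (c - 1)) => H1 /=; case: (eqVneq j F) => /= H3 H4; lia.
Qed.

Lemma xhat_P F : 0 < F -> Pv F (xhat F).
Proof.
move=> HF; have := ceil_halfE F; split.
- by move=> j Hj; have := xhat_val F j Hj; lia.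
- by have := xhat_val F F ltac:(lia); lia.
- move=> i j Hi Hj Hij; have := xhat_val F i ltac:(lia);
  have := xhat_val F j ltac:(lia); have := xhat_val F (i + j) ltac:(lia); lia.
- move=> i Hi Hi2; have := xhat_val F i ltac:(lia);
  have := xhat_val F (F - i) ltac:(lia); lia.
Qed.

Lemma root_noedge F (y : vec F) : ~ GK_edge F (xhat F) y.
Proof.
move=> [_ [_ [m [Hm Hx0 _ H2 _]]]].
have := xhat_val F m Hm; have := ceil_halfE F; lia.
Qed.

Lemma noedge_root F (x : vec F) : Pv F x -> F <= (mx F x).*2 -> x = xhat F.
Proof.
move=> Px Hm2; case: (Px) => P01 PF Pcl Psym.
have [H1 Hz Hmin] := mx_spec F x.
move: Hm2 H1 Hz Hmin; move Hm: (mx F x) => m Hm2 H1 Hz Hmin.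
have HA : forall j, 0 < j < m -> kcoord F x j = 1%R.
  move=> j Hj; apply: P_one => //; [lia | exact: Hmin].
have HB : forall j, m <= j < F -> kcoord F x j = 0%R.
  move=> j Hj; case: (eqVneq j m) => [->|Hjm]; first by apply: Hz; lia.
  have := HA (F - j); have := Psym j; have := P01 j; lia.
apply: vec_ext => j Hj.
case: (eqVneq j F) => [->|HjF].
  by rewrite PF; have := xhat_val F F ltac:(lia); lia.
have := xhat_val F j Hj; have := ceil_halfE F.
have := HA j; have := HA (F - j); have := HB j; have := Psym j.
have := P_half F x j Px; lia.
Qed.

Lemma mem_zip1 (T : eqType) (a b : T) s t : (a, b) \in zip s t -> a \in s.
Proof.
elim: s t => [|x s IH] [|y t] //=; rewrite !in_cons.
by case/orP => [/eqP [-> _]|/IH ->]; rewrite ?eqxx ?orbT.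
Qed.

Lemma walk_uniq F (v : vec F) p q :
  walk _ (GK_edge F) v p (xhat F) -> walk _ (GK_edge F) v q (xhat F) -> p = q.
Proof.
elim: p v q => [|w p IH] v [|w' q] //=.
- by move=> -> [E _]; case: (root_noedge _ _ E).
- by move=> [E _] Ev; rewrite Ev in E; case: (root_noedge _ _ E).
- move=> [E1 W1] [E2 W2]; have Ew := edge_func _ _ _ _ E1 E2; subst w'.
  by congr (_ :: _); exact: IH W1 W2.
Qed.

Lemma path_exists F : 0 < F -> forall k (v : vec F), F.+1 - mx F v <= k -> Pv F v ->
  exists p, walk _ (GK_edge F) v p (xhat F) /\ uniq (zip (v :: p) p) /\
            all (fun u => mx F v <= mx F u) (v :: p).
Proof.
move=> HF; elim => [|k IH] v Hk Pv'; have [H1 _ _] := mx_spec F v;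
  case: (ltnP ((mx F v).*2) F) => H2.
- lia.
- exists [::]; rewrite /= leqnn; split => //; exact: noedge_root.
- have E := up_edge _ _ Pv' H2; have Hmono := edge_mono F _ _ E.
  have [_ Pw _ _ _] := edge_m F _ _ E.
  have [H1w _ _] := mx_spec F (shiftv F v (mx F v)).
  have [p [W [U A]]] := IH (shiftv F v (mx F v)) ltac:(lia) Pw.
  exists (shiftv F v (mx F v) :: p); split; first by split.
  split.
    rewrite [zip _ _]/= cons_uniq U andbT; apply/negP => /mem_zip1 Hv.
    have := allP A v Hv; lia.
  apply/allP => u; rewrite in_cons => /orP [/eqP ->//|Hu].
  have := allP A u Hu; lia.
- exists [::]; rewrite /= leqnn; split => //; exact: noedge_root.
Qed.

Lemma tree_part F : 0 < F -> is_tree (vec F) (GK_vertex F) (GK_edge F) (xhat F).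
Proof.
move=> HF; split; first exact: (P_vertex _ _ (xhat_P _ HF)).
move=> v Vv Hne.
have [p [W [U _]]] := path_exists _ HF F.+1 v (leq_subr _ _) (vertex_P _ _ Vv).
exists p; split; first by split.
by move=> q [Wq _]; exact: walk_uniq _ _ _ _ W Wq.
Qed.

Lemma down_P F (x : vec F) n m : Pv F x -> 0 < m -> n + m = F -> m < n ->
  kcoord F x n = 0%R ->
  (forall k j, 0 < k -> 0 < j -> k + j = n ->
                (1 <= kcoord F x k + kcoord F x j)%R) ->
  kcoord F x (n - m) = 1%R -> n != m + m -> F != (m + m) + (m + m) ->
  Pv F (shiftv F x n).
Proof.
move=> Px Hm Hnm Hmn Hxn C2 Hd H5 H6.
have Hxm : kcoord F x m = 1%R.
  have -> : m = F - n by lia. apply: P_pair => //; lia.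
case: (Px) => P01 PF Pcl Psym.
have HB : forall j, 0 < j -> m + j <= F -> j != n -> kcoord F x j = 0%R ->
    kcoord F x (m + j) = 0%R.
  move=> j Hj Hmj Hjn Hxj.
  have Hnj : kcoord F x (n - j) = 1%R.
    have := C2 j (n - j) Hj ltac:(lia) ltac:(lia).
    have := P01 (n - j) ltac:(lia); lia.
  case: (eqVneq (m + j).*2 F) => H2.
    have := Pcl j j Hj Hj ltac:(lia) Hxj Hxj.
    have -> : j + j = n - m by lia.
    lia.
  have := Psym (m + j) ltac:(lia) H2; have -> : F - (m + j) = n - j by lia.
  have := P01 (m + j) ltac:(lia); lia.
have HC : kcoord F x (m + m) = 0%R.
  have := Psym (m + m) ltac:(lia) ltac:(lia).
  have -> : F - (m + m) = n - m by lia.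
  have := P01 (m + m) ltac:(lia); lia.
have HB' : forall j, 0 < j -> j + m <= F -> j != n -> kcoord F x j = 0%R ->
    kcoord F x (j + m) = 0%R.
  by move=> j *; rewrite addnC; apply: HB => //; lia.
have Hnm' : n + m = F by [].
have Ey : forall p, 0 < p <= F -> kcoord F (shiftv F x n) p =
    (kcoord F x p + (if p == n then 1 else 0) - (if p == m then 1 else 0))%R.
  by move=> p Hp; rewrite (shiftE' F x n m _ Hnm').
have Hnm2 : n != m by apply/eqP; lia.
have Yn : kcoord F (shiftv F x n) n = 1%R.
  by rewrite Ey ?eqxx ?(negbTE Hnm2) ?Hxn; [ | lia].
have Ym : kcoord F (shiftv F x n) m = 0%R.
  by rewrite Ey ?eqxx 1?eq_sym ?(negbTE Hnm2) ?Hxm; [ | lia].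
have Yo : forall p, 0 < p <= F -> p != n -> p != m ->
    kcoord F (shiftv F x n) p = kcoord F x p.
  by move=> p Hp H1 H2; rewrite Ey // (negbTE H1) (negbTE H2); lia.
have yz : forall p, 0 < p <= F -> kcoord F (shiftv F x n) p = 0%R ->
    p = m \/ (p <> n /\ p <> m /\ kcoord F x p = 0%R).
  move=> p Hp; case: (eqVneq p n) => [->|H1]; first by rewrite Yn; lia.
  case: (eqVneq p m) => [->|H2]; first by left.
  by rewrite Yo //; right; split; [apply/eqP|split; [apply/eqP|]].
have yo : forall p, 0 < p <= F -> kcoord F (shiftv F x n) p = 1%R ->
    p = n \/ (p <> n /\ p <> m /\ kcoord F x p = 1%R).
  move=> p Hp; case: (eqVneq p n) => [->|H1]; first by left.
  case: (eqVneq p m) => [->|H2]; first by rewrite Ym; lia.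
  by rewrite Yo //; right; split; [apply/eqP|split; [apply/eqP|]].
split.
- move=> p Hp; case: (eqVneq p n) => [->|H1]; first by rewrite Yn; right.
  case: (eqVneq p m) => [->|H2]; first by rewrite Ym; left.
  by rewrite Yo //; apply: P01.
- by rewrite Yo //; apply/eqP; lia.
- move=> i j Hi Hj Hij Hyi Hyj.
  case: (yz i ltac:(lia) Hyi) => [Ei|[Hin [Him Hxi]]];
  case: (yz j ltac:(lia) Hyj) => [Ej|[Hjn [Hjm Hxj]]].
  + rewrite Ei Ej Yo //; [lia| |]; apply/eqP; lia.
  + have Hjd : j <> n - m by move=> E; have := Hd; rewrite -E; lia.
    rewrite Ei Yo; [ | lia | apply/eqP; lia | apply/eqP; lia].
    by apply: HB => //; [lia | apply/eqP].
  + have Hid : i <> n - m by move=> E; have := Hd; rewrite -E; lia.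
    rewrite Ej Yo; [ | lia | apply/eqP; lia | apply/eqP; lia].
    by apply: HB' => //; [lia | apply/eqP].
  + have Hx := Pcl i j Hi Hj Hij Hxi Hxj.
    have Hijn : i + j <> n by move=> E; have := C2 i j Hi Hj E; lia.
    have Hijm : i + j <> m by move=> E; have := Hxm; rewrite -E; lia.
    by rewrite Yo //; (by apply/eqP) || lia.
- move=> i Hi Hi2 Hyi Hyf.
  case: (yo i ltac:(lia) Hyi) => [Ei|[Hin [Him Hxi]]].
    by move: Hyf; rewrite Ei (_ : F - n = m) ?Ym; lia.
  case: (yo (F - i) ltac:(lia) Hyf) => [Ef|[Hfn [Hfm Hxf]]]; first lia.
  exact: (Psym i Hi Hi2 Hxi Hxf).
Qed.

Lemma children F (HF : 0 < F) (x y : vec F) : Pv F x ->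
    (GK_edge F y x <->
      exists n : nat,
        1 <= n <= F /\
            kcoord F x n = 0%R /\
            (forall k j, 0 < k -> 0 < j -> k + j = n ->
                (1 <= kcoord F x k + kcoord F x j)%R) /\
            (F < n.*2 /\ n < F) /\
            kcoord F x (n.*2 - F) = 1%R /\
            3 * n <> 2 * F /\ 4 * n <> 3 * F /\
            (Posz F - Posz (mx F x) < Posz n)%R /\
            y = shiftv F x n).
Proof.
move=> Px; split.
- move=> [Vy [_ [m [Hm Hym Hmin H2 Ex]]]].
  have Py := vertex_P F y Vy.
  case: (Py) => P01 PF Pcl Psym.
  subst x.
  exists (F - m).
  have Hmn : m + (F - m) = F by lia.
  move: (F - m) Hmn => n Hmn.
  have Yn : kcoord F y n = 1%R.
    have := P_pair F y m Py ltac:(lia) Hym; rewrite (_ : F - m = n) //; lia.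
  have Hlt : forall i, 0 < i < m -> kcoord F y i = 1%R.
    move=> i Hi; apply: P_one => //; [lia | exact: Hmin].
  have Ex : forall p, 0 < p <= F -> kcoord F (shiftv F y m) p =
      (kcoord F y p + (if p == m then 1 else 0) - (if p == n then 1 else 0))%R.
    by move=> p Hp; rewrite (shiftE' F y m n _ Hmn).
  have Hmn2 : m != n by apply/eqP; lia.
  have Xm : kcoord F (shiftv F y m) m = 1%R.
    by rewrite Ex ?eqxx ?(negbTE Hmn2) ?Hym; [ | lia].
  have Xn : kcoord F (shiftv F y m) n = 0%R.
    by rewrite Ex ?eqxx 1?eq_sym ?(negbTE Hmn2) ?Yn; [ | lia].
  have Xo : forall p, 0 < p <= F -> p != m -> p != n ->
      kcoord F (shiftv F y m) p = kcoord F y p.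
    by move=> p Hp H1 H3; rewrite Ex // (negbTE H1) (negbTE H3); lia.
  have Hd1 : kcoord F y (n - m) = 1%R.
    case: (P01 (n - m) ltac:(lia)) => // H0.
    have := Pcl (n - m) m ltac:(lia) ltac:(lia) ltac:(lia) H0 Hym.
    rewrite (_ : n - m + m = n); lia.
  have Hnmm : n - m <> m by move=> E; rewrite E Hym in Hd1; lia.
  split; first lia.
  split; first exact: Xn.
  split.
    move=> k j Hk Hj Hkj.
    have := Pcl k j Hk Hj ltac:(lia); rewrite Hkj Yn.
    case: (eqVneq k m) => [->|Hkm]; case: (eqVneq j m) => [->|Hjm].
    + rewrite Xm; lia.
    + rewrite Xm Xo //; [ | lia | apply/eqP; lia]; have := P01 j; lia.
    + rewrite Xm Xo //; [ | lia | apply/eqP; lia]; have := P01 k; lia.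
    + rewrite !Xo //; try lia; try (apply/eqP; lia).
      have := P01 j; have := P01 k; lia.
  split; first lia.
  split.
    rewrite (_ : n.*2 - F = n - m); last lia.
    by rewrite Xo //; [ lia | apply/eqP | apply/eqP]; lia.
  split; first by move=> E; apply: Hnmm; lia.
  split.
    move=> E; have := Pcl m m ltac:(lia) ltac:(lia) ltac:(lia) Hym Hym => H.
    have := Pcl (m + m) (m + m) ltac:(lia) ltac:(lia) ltac:(lia) H H.
    rewrite (_ : m + m + (m + m) = F); lia.
  split.
    have := mx_gt F (shiftv F y m) m ltac:(lia).
    have : forall i, 0 < i <= m -> kcoord F (shiftv F y m) i <> 0%R.
      move=> i Hi; case: (eqVneq i m) => [->|Him]; first by rewrite Xm.
      rewrite Xo //; [ | lia | apply/eqP; lia]; rewrite Hlt //; lia.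
    move=> H /(_ H); lia.
  apply: vec_ext => j Hj.
  rewrite (shiftE' F (shiftv F y m) n m j ltac:(lia) Hj).
  case: (eqVneq j m) => [->|Hjm]; first by rewrite Xm Hym; case: eqP; lia.
  case: (eqVneq j n) => [->|Hjn]; first by rewrite Xn Yn.
  by rewrite Xo //; lia.
- move=> [n [Hn [Hxn [C2 [[Hn1 Hn2] [Hd [H5 [H6 [H7 ->]]]]]]]]].
  have [m Hnm] : exists m, n + m = F by exists (F - n); lia.
  rewrite (_ : n.*2 - F = n - m) in Hd; last lia.
  have Py := down_P F x n m Px ltac:(lia) Hnm ltac:(lia) Hxn C2 Hd
    ltac:(apply/eqP; lia) ltac:(apply/eqP; lia).
  split; first exact: P_vertex.
  split; first exact: P_vertex.
  have Xm : kcoord F x m = 1%R.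
    have := P_pair F x n Px ltac:(lia) Hxn; rewrite (_ : F - n = m) //; lia.
  have [H1 Hz Hmin] := mx_spec F x.
  have Hmx : m < mx F x by lia.
  have Ey : forall p, 0 < p <= F -> kcoord F (shiftv F x n) p =
      (kcoord F x p + (if p == n then 1 else 0) - (if p == m then 1 else 0))%R.
    by move=> p Hp; rewrite (shiftE' F x n m _ Hnm).
  have Hnm2 : n != m by apply/eqP; lia.
  exists m; split.
  + lia.
  + by rewrite Ey ?eqxx 1?eq_sym ?(negbTE Hnm2) ?Xm; [lia | lia].
  + move=> i Hi; rewrite Ey; last lia.
    rewrite (_ : (i == n) = false); last by apply/eqP; lia.
    rewrite (_ : (i == m) = false); last by apply/eqP; lia.
    have := Hmin i ltac:(lia); lia.
  + lia.
  + apply: vec_ext => j Hj.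
    rewrite (shiftE' F (shiftv F x n) m n j ltac:(lia) Hj) Ey //.
    case: (eqVneq j m) => [->|Hjm].
      rewrite (_ : (m == n) = false); first lia. by apply/eqP; lia.
    case: (eqVneq j n) => [->|Hjn]; last lia.
    lia.
Qed.

Theorem theorem15 (F : nat) (HF : 0 < F) :
  is_tree (vec F) (GK_vertex F) (GK_edge F) (xhat F) /\
  forall (S : nat -> bool) (x : vec F), in_IF F S -> kunz_vec S F x ->
    forall y : vec F, GK_edge F y x <->
      exists n : nat,
        1 <= n <= F /\
            kcoord F x n = 0%R /\
            (forall k j, 0 < k -> 0 < j -> k + j = n ->
                (1 <= kcoord F x k + kcoord F x j)%R) /\
            (F < n.*2 /\ n < F) /\
            kcoord F x (n.*2 - F) = 1%R /\
            3 * n <> 2 * F /\ 4 * n <> 3 * F /\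
            (Posz F - Posz (mx F x) < Posz n)%R /\
            y = shiftv F x n.
Proof.
split; first exact: tree_part.
move=> S x HS Hk y; apply: children => //.
by apply: vertex_P; exists S.
Qed.
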